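(* Let $S=\langle P,\varphi\rangle$ be a SUT model, $t$ a strength, $N\ge1$ an integer and $lb$ an integer with $0\le lb<CAN(t,S)$ and $lb+1\le N$. Let $m=N-(lb+1)$ be the number of variables $u_i$, and consider the Weighted Partial MaxSAT instance $\Psi$ defined in the context. If $N\ge CAN(t,S)$, the optimal cost of $\Psi$ is $CAN(t,S)-(lb+1)+(|\mathcal T_a|-T(N;t,S))\cdot(m+1)$; otherwise it is $N-(lb+1)+(|\mathcal T_a|-T(N;t,S))\cdot(m+1)$.
   Context: A SUT model is $S=\langle P,\varphi\rangle$, where $P$ is a finite set of parameters, each $p\in P$ having a finite nonempty domain $d(p)$, and $\varphi$ is a propositional formula whose atoms have the form $(p=v)$ with $p\in P$, $v\in d(p)$. A test case is a full assignment $A$ giving each $p$ a value in $d(p)$ such that $\varphi$ is true when each atom $(p=v)$ is read as true iff $A(p)=v$; it is assumed that at least one test case exists. Fix a strength $t$ with $1\le t\le|P|$. A $t$-tuple is an assignment of values to exactly $t$ distinct parameters, viewed as a set of pairs $(p,v)$; a test case covers $\tau$ if it assigns $v$ to $p$ for every $(p,v)\in\tau$. A $t$-tuple is allowed if some test case covers it; $\mathcal T_a$ is the set of allowed $t$-tuples. A covering array $CA(N;t,S)$ is a list of $N$ test cases (repetitions allowed) covering every allowed $t$-tuple; $CAN(t,S)$ is the minimum such $N$. $T(N;t,S)$ is the maximum number of $t$-tuples covered by a list of $N$ test cases. $[N]=\{1,\dots,N\}$. A Weighted Partial MaxSAT instance consists of hard constraints and soft clauses $(c,w)$ with positive integer weights;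 its optimal cost is the minimum, over truth assignments satisfying all hard constraints, of the total weight of falsified soft clauses ($\infty$ if the hard constraints are unsatisfiable). Variables: $x_{i,p,v}$ ($i\in[N]$, $p\in P$, $v\in d(p)$), $c^i_\tau$ ($i\in\{0,\dots,N\}$, $\tau\in\mathcal T_a$), $u_i$ ($i\in\{lb+2,\dots,N\}$). Hard constraints of $\Psi$: (X) for every $i\in[N]$, $p\in P$: exactly one of $\{x_{i,p,v}:v\in d(p)\}$ is true; (SUTX) for every $i\in[N]$: the formula obtained from $\varphi$ by replacing each atom $(p=v)$ with $x_{i,p,v}$; (a) for every $i\in[N]$, $\tau\in\mathcal T_a$, $(p,v)\in\tau$: $c^i_\tau\rightarrow(c^{i-1}_\tau\vee x_{i,p,v})$; (c) for every $\tau\in\mathcal T_a$: $c^N_\tau\rightarrow\neg c^0_\tau$; (BSU) for every $i\in\{lb+2,\dots,N-1\}$: $u_{i+1}\rightarrow u_i$; (CCU) for every $i\in\{lb+2,\dots,N\}$, $\tau\in\mathcal T_a$: $\neg c^{i-1}_\tau\rightarrow u_i$. Soft clauses: $(\neg u_i,1)$ for every $i\in\{lb+2,\dots,N\}$, and $(c^N_\tau,m+1)$ for every $\tau\in\mathcal T_a$. *)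

(* Defs.v *)
From mathcomp Require Import all_boot.
Set Implicit Arguments.
Unset Strict Implicit.
Unset Printing Implicit Defensive.

Inductive form (A : Type) : Type :=
| FTrue
| FFalse
| FAtom of A
| FNot of form A
| FAnd of form A & form A
| FOr of form A & form A
| FImp of form A & form A
| FIff of form A & form A.
Arguments FTrue {A}.
Arguments FFalse {A}.

Fixpoint eval_form (A : Type) (val : A -> bool) (f : form A) : bool :=
  match f with
  | FTrue => true
  | FFalse => false
  | FAtom a => val a
  | FNot g => ~~ eval_form val g
  | FAnd g h => eval_form val g && eval_form val h
  | FOr g h => eval_form val g || eval_form val h
  | FImp g h => eval_form val g ==> eval_form val h
  | FIff g h => eval_form val g == eval_form val h
  end.

Fixpoint map_form (A B : Type) (r : A -> B) (f : form A) : form B :=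
  match f with
  | FTrue => FTrue
  | FFalse => FFalse
  | FAtom a => FAtom (r a)
  | FNot g => FNot (map_form r g)
  | FAnd g h => FAnd (map_form r g) (map_form r h)
  | FOr g h => FOr (map_form r g) (map_form r h)
  | FImp g h => FImp (map_form r g) (map_form r h)
  | FIff g h => FIff (map_form r g) (map_form r h)
  end.

Fixpoint atoms (A : Type) (f : form A) : seq A :=
  match f with
  | FTrue | FFalse => [::]
  | FAtom a => [:: a]
  | FNot g => atoms g
  | FAnd g h | FOr g h | FImp g h | FIff g h => atoms g ++ atoms h
  end.

Definition big_or (A : Type) (s : seq (form A)) : form A := foldr (@FOr A) FFalse s.
Definition big_and (A : Type) (s : seq (form A)) : form A := foldr (@FAnd A) FTrue s.

Fixpoint at_most_one (A : Type) (s : seq A) : form A :=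
  match s with
  | [::] => FTrue
  | a :: s' => FAnd (big_and [seq FNot (FAnd (FAtom a) (FAtom b)) | b <- s'])
                    (at_most_one s')
  end.

Definition exactly_one (A : Type) (s : seq A) : form A :=
  FAnd (big_or [seq FAtom a | a <- s]) (at_most_one s).

(* A literal is (x, b): it is the variable x if b, and its negation
   if ~~ b.  A clause is a list of literals (their disjunction).      *)
Record wpms (X : Type) := WPMS {
  wpms_hard : seq (form X);
  wpms_soft : seq (seq (X * bool) * nat) }.

Definition lit_true (X : Type) (a : X -> bool) (l : X * bool) : bool :=
  a l.1 == l.2.

Definition clause_true (X : Type) (a : X -> bool) (c : seq (X * bool)) : bool :=
  has (lit_true a) c.

Definition hard_sat (X : Type) (I : wpms X) (a : X -> bool) : bool :=
  all (eval_form a) (wpms_hard I).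

Definition soft_cost (X : Type) (I : wpms X) (a : X -> bool) : nat :=
  \sum_(cw <- wpms_soft I | ~~ clause_true a cw.1) cw.2.

Definition wpms_opt_cost (X : Type) (I : wpms X) (k : nat) : Prop :=
  (exists a : X -> bool, hard_sat I a /\ soft_cost I a = k) /\
  (forall a : X -> bool, hard_sat I a -> k <= soft_cost I a).

(* Parameters range over the finite type P; the values of
   all parameters are taken from a common finite universe V and the
   domain of p is the (nonempty) set d p.  phi is a formula whose atoms
   are pairs (p, v), read as (p = v).                                                  *)

Section SUT.
Variables (P V : finType) (d : P -> {set V}) (phi : form (P * V)).

Definition sut_model : Prop :=
  (forall p, d p != set0) /\ (forall pv, pv \in atoms phi -> pv.2 \in d pv.1).

Definition test_case (A : {ffun P -> V}) : bool :=
  [forall p, A p \in d p] && eval_form (fun pv : P * V => A pv.1 == pv.2) phi.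

Variable t : nat.

Definition t_tuple (tau : {set P * V}) : bool :=
  [&& #|tau| == t,
      [forall pv in tau, pv.2 \in d pv.1] &
      [forall pv in tau, forall qw in tau, (pv.1 == qw.1) ==> (pv == qw)]].

Definition covers (A : {ffun P -> V}) (tau : {set P * V}) : bool :=
  [forall pv in tau, A pv.1 == pv.2].

Definition allowed (tau : {set P * V}) : bool :=
  t_tuple tau && [exists A, test_case A && covers A tau].

Definition Ta : {set {set P * V}} := [set tau | allowed tau].

Definition has_CA (N : nat) : bool :=
  [exists L : N.-tuple {ffun P -> V},
     all test_case L && [forall tau in Ta, has (covers^~ tau) L]].

Lemma has_CA_ex : exists N, has_CA N.
Proof.
set s := [seq A <- enum {ffun P -> V} | test_case A].
exists (size s); apply/existsP; exists (in_tuple s).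
apply/andP; split; first by apply/allP => A; rewrite mem_filter => /andP[].
apply/forall_inP => tau; rewrite inE => /andP[_ /existsP[A /andP[tA cA]]].
by apply/hasP; exists A => //; rewrite mem_filter tA mem_enum.
Qed.

Definition CAN : nat := ex_minn has_CA_ex.

Definition n_covered (L : seq {ffun P -> V}) : nat :=
  #|[set tau | t_tuple tau && has (covers^~ tau) L]|.

Definition Tmax (N : nat) : nat :=
  \max_(L : N.-tuple {ffun P -> V} | all test_case L) n_covered L.

Inductive psi_var :=
| xvar of nat & P & V
| cvar of nat & {set P * V}
| uvar of nat.

Variables (N lb : nat).

Definition m_u : nat := N - (lb + 1).

Definition idxN : seq nat := iota 1 N.
Definition idx_BSU : seq nat := iota (lb + 2) (N - (lb + 2)).
Definition idx_U : seq nat := iota (lb + 2) (N - (lb + 1)).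

Definition V_ (x : psi_var) : form psi_var := FAtom x.

Definition hard_X : seq (form psi_var) :=
  [seq exactly_one [seq xvar i p v | v <- enum (d p)] | i <- idxN, p <- enum P].

Definition hard_SUTX : seq (form psi_var) :=
  [seq map_form (fun pv : P * V => xvar i pv.1 pv.2) phi | i <- idxN].

Definition hard_a : seq (form psi_var) :=
  flatten [seq [seq FImp (V_ (cvar i tau))
                          (FOr (V_ (cvar i.-1 tau)) (V_ (xvar i pv.1 pv.2)))
               | pv <- enum tau]
          | i <- idxN, tau <- enum Ta].

Definition hard_c : seq (form psi_var) :=
  [seq FImp (V_ (cvar N tau)) (FNot (V_ (cvar 0 tau))) | tau <- enum Ta].

Definition hard_BSU : seq (form psi_var) :=
  [seq FImp (V_ (uvar i.+1)) (V_ (uvar i)) | i <- idx_BSU].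

Definition hard_CCU : seq (form psi_var) :=
  [seq FImp (FNot (V_ (cvar i.-1 tau))) (V_ (uvar i)) | i <- idx_U, tau <- enum Ta].

Definition soft_Psi : seq (seq (psi_var * bool) * nat) :=
  [seq ([:: (uvar i, false)], 1) | i <- idx_U] ++
  [seq ([:: (cvar N tau, true)], m_u + 1) | tau <- enum Ta].

Definition Psi : wpms psi_var :=
  WPMS (hard_X ++ hard_SUTX ++ hard_a ++ hard_c ++ hard_BSU ++ hard_CCU) soft_Psi.

End SUT.

(* Main.v *)
Require Import Defs.
From mathcomp Require Import all_boot zify.
Set Implicit Arguments.
Unset Strict Implicit.
Unset Printing Implicit Defensive.

Lemma count_enum_card (T : finType) (A : {set T}) (q : pred T) :
  count q (enum A) = #|[set x in A | q x]|.
Proof.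
rewrite -sum1_count big_enum_cond /= sum1_card.
by apply: eq_card => x; rewrite !inE.
Qed.

Lemma all_flat (T : Type) (p : pred T) (ss : seq (seq T)) :
  all p (flatten ss) = all (all p) ss.
Proof. by elim: ss => //= s ss IH; rewrite all_cat IH. Qed.

Lemma eval_map (A B : Type) (r : A -> B) (val : B -> bool) (f : form A) :
  eval_form val (map_form r f) = eval_form (fun x => val (r x)) f.
Proof. by elim: f => //= [g -> | g -> h -> | g -> h -> | g -> h -> | g -> h ->]. Qed.

Lemma eval_ext (A : Type) (v1 v2 : A -> bool) (f : form A) :
  (forall x, List.In x (atoms f) -> v1 x = v2 x) -> eval_form v1 f = eval_form v2 f.
Proof.
elim: f => //= [a H | g IH H | g IHg h IHh H | g IHg h IHh H | g IHg h IHh H | g IHg h IHh H];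
 try (by rewrite H //; left);
 try (by rewrite IH);
 rewrite IHg ?IHh // => x Hx; apply: H; apply: List.in_or_app; tauto.
Qed.

Lemma eval_big_and (A : Type) (val : A -> bool) (s : seq (form A)) :
  eval_form val (big_and s) = all (eval_form val) s.
Proof. by elim: s => //= f s ->. Qed.

Lemma eval_big_or (A : Type) (val : A -> bool) (s : seq (form A)) :
  eval_form val (big_or s) = has (eval_form val) s.
Proof. by elim: s => //= f s ->. Qed.

Lemma amo_sound (A : Type) (W : eqType) (f : W -> A) (val : A -> bool) (w : seq W) :
  eval_form val (at_most_one (map f w)) ->
  forall x y, x \in w -> y \in w -> val (f x) -> val (f y) -> x = y.
Proof.
elim: w => //= z w IH /andP[Hb Ha] x y.
rewrite eval_big_and !all_map in Hb.
have Hz : forall y, y \in w -> val (f z) -> val (f y) -> False.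
  by move=> y' Hy' H1 H2; move: (allP Hb y' Hy') => /=; rewrite H1 H2.
rewrite !inE => /orP[/eqP-> | Hx] /orP[/eqP-> | Hy] // H1 H2.
- by case: (Hz y).
- by case: (Hz x).
- exact: IH.
Qed.

Lemma amo_complete (A : Type) (W : eqType) (f : W -> A) (val : A -> bool) (w : seq W) :
  uniq w ->
  (forall x y, x \in w -> y \in w -> val (f x) -> val (f y) -> x = y) ->
  eval_form val (at_most_one (map f w)).
Proof.
elim: w => //= z w IH /andP[nz uw] H.
apply/andP; split; last first.
  by apply: IH => // x y Hx Hy; apply: H; rewrite inE ?Hx ?Hy orbT.
rewrite eval_big_and !all_map; apply/allP => y Hy /=.
apply/negP => /andP[H1 H2].
have Hy' : y \in z :: w by rewrite inE Hy orbT.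
have E := H z y (mem_head _ _) Hy' H1 H2.
by rewrite E Hy in nz.
Qed.

Section Cov.
Variables (P V : finType) (d : P -> {set V}) (phi : form (P * V)) (t : nat).
Variable A0 : {ffun P -> V}.
Hypothesis HA0 : test_case d phi A0.

Local Notation tc := (test_case d phi).
Local Notation ncov := (n_covered d t).
Local Notation Tm := (Tmax d phi t).
Local Notation TA := (Ta d phi t).
Local Notation CANv := (CAN d phi t).

Lemma Tmax_ge (s : seq {ffun P -> V}) : all tc s -> ncov s <= Tm (size s).
Proof. by move=> H; exact: (@leq_bigmax_cond _ _ (fun L : (size s).-tuple _ => ncov L) (in_tuple s)). Qed.

Lemma Tmax_wit k : exists L : seq {ffun P -> V},
  [/\ size L = k, all tc L & ncov L = Tm k].
Proof.
have Hc : 0 < #|[pred L : k.-tuple {ffun P -> V} | all tc L]|.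
  apply/card_gt0P; exists (nseq_tuple k A0); rewrite inE /=.
  by apply/allP => x /nseqP[-> _].
have [L HL Heq] := eq_bigmax_cond (fun L : k.-tuple _ => ncov L) Hc.
exists L; split; first exact: size_tuple.
  by []. 
by rewrite /Tmax; symmetry; exact: Heq.
Qed.

Lemma ncov_cat s1 s2 : ncov s1 <= ncov (s1 ++ s2).
Proof.
apply: subset_leq_card; apply/subsetP => tau; rewrite !inE => /andP[Ht H].
by rewrite Ht has_cat H.
Qed.

Lemma ncov_sub_Ta s : all tc s -> [set tau | t_tuple d t tau && has ((@covers P V)^~ tau) s] \subset TA.
Proof.
move=> Hs; apply/subsetP => tau; rewrite !inE => /andP[Ht /hasP[B HB Hc]].
rewrite /allowed Ht /=; apply/existsP; exists B; rewrite Hc andbT.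
exact: (allP Hs B HB).
Qed.

Lemma ncov_le_Ta s : all tc s -> ncov s <= #|TA|.
Proof. by move=> Hs; apply: subset_leq_card; exact: ncov_sub_Ta. Qed.

Lemma Tmax_le_Ta k : Tm k <= #|TA|.
Proof. by have [L [_ HL <-]] := Tmax_wit k; exact: ncov_le_Ta. Qed.

Lemma Tmax_mono k n : k <= n -> Tm k <= Tm n.
Proof.
move=> kn; have [L [sL HL <-]] := Tmax_wit k.
apply: (leq_trans (ncov_cat L (nseq (n - k) A0))).
have := Tmax_ge (s := L ++ nseq (n - k) A0); rewrite size_cat size_nseq sL subnKC //.
apply; rewrite all_cat HL /=; by apply/allP => x /nseqP[-> _].
Qed.

Lemma CAN_le (L : seq {ffun P -> V}) :
  all tc L -> (forall tau, tau \in TA -> has ((@covers P V)^~ tau) L) -> CANv <= size L.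
Proof.
move=> HL Hc; rewrite /CAN; case: ex_minnP => m _ Hm; apply: Hm.
apply/existsP; exists (in_tuple L); rewrite HL /=.
by apply/forall_inP => tau /Hc.
Qed.

Lemma CA_wit : exists L : seq {ffun P -> V},
  [/\ size L = CANv, all tc L & forall tau, tau \in TA -> has ((@covers P V)^~ tau) L].
Proof.
rewrite /CAN; case: ex_minnP => m /existsP[L /andP[HL Hc]] _.
exists L; split => //; first exact: size_tuple.
by move=> tau /(forall_inP Hc).
Qed.

Lemma Tmax_strict k : k < CANv -> Tm k < Tm k.+1.
Proof.
move=> kC; have [L [sL HL HT]] := Tmax_wit k.
have : ~~ [forall tau in TA, has ((@covers P V)^~ tau) L].
  apply/negP => /forall_inP Hc.
  by have := CAN_le HL Hc; rewrite sL; lia.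
move/forall_inPn => [tau Htau Hn].
have := Htau; rewrite inE => /andP[Ht /existsP[B /andP[HB HcB]]].
rewrite -HT.
have -> : k.+1 = size (B :: L) by rewrite /= sL.
apply: (leq_trans _ (Tmax_ge (s := B :: L) _)); last by rewrite /= HB HL.
apply: proper_card; apply/properP; split.
  apply/subsetP => tau'; rewrite !inE => /andP[Ht' H] /=; by rewrite Ht' H orbT.
exists tau; first by rewrite inE Ht /= HcB.
by rewrite inE (negbTE Hn) andbF.
Qed.

End Cov.

Lemma has_take_mono (T : Type) (p : pred T) (s : seq T) m n :
  m <= n -> has p (take m s) -> has p (take n s).
Proof. by move=> mn H; rewrite -(subnKC mn) takeD has_cat H. Qed.

Lemma count_iota_lt b a n : count (fun i => i < b) (iota a n) = minn n (b - a).
Proof.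
elim: n a => [|n IH] a /=; first by rewrite min0n.
rewrite IH; case: (ltnP a b) => H /=; lia.
Qed.

Lemma count_sub_in (T : eqType) (p q : pred T) (s : seq T) :
  (forall x, x \in s -> p x -> q x) -> count p s <= count q s.
Proof.
elim: s => //= x s IH H.
apply: leq_add; last by apply: IH => y Hy; apply: H; rewrite inE Hy orbT.
case Hp: (p x) => //=; by rewrite (H x (mem_head _ _) Hp).
Qed.

Section Main.
Variables (P V : finType) (d : P -> {set V}) (phi : form (P * V)) (t N lb : nat).

Local Notation tc := (test_case d phi).
Local Notation ncov := (n_covered d t).
Local Notation Tm := (Tmax d phi t).
Local Notation TA := (Ta d phi t).
Local Notation CANv := (CAN d phi t).
Local Notation X := (psi_var P V).
Local Notation I := (Psi d phi t N lb).
Local Notation cov tau := ((@covers P V)^~ tau).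

Lemma soft_cost_eq (a : X -> bool) :
  soft_cost I a = count (fun i => a (@uvar P V i)) (idx_U N lb)
     + count (fun tau => ~~ a (@cvar P V N tau)) (enum TA) * (m_u N lb + 1).
Proof.
rewrite /soft_cost /= /soft_Psi big_cat !big_map /=.
congr (_ + _).
  rewrite -sum1_count; apply: eq_bigl => i.
  by rewrite /clause_true /lit_true /= orbF; case: (a _).
rewrite (eq_bigl (fun tau => ~~ a (@cvar P V N tau))); last first.
  by move=> tau; rewrite /clause_true /lit_true /= orbF; case: (a _).
by rewrite big_const_seq iter_addn_0 mulnC.
Qed.

Lemma hard_sat_eq (a : X -> bool) :
  hard_sat I a = [&& all (eval_form a) (hard_X d N), all (eval_form a) (hard_SUTX phi N),
     all (eval_form a) (hard_a d phi t N), all (eval_form a) (hard_c d phi t N),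
     all (eval_form a) (hard_BSU P V N lb) & all (eval_form a) (hard_CCU d phi t N lb)].
Proof. by rewrite /hard_sat /= !all_cat. Qed.

End Main.

Section Upper.
Variables (P V : finType) (d : P -> {set V}) (phi : form (P * V)) (t N lb : nat).
Variable A0 : {ffun P -> V}.

Local Notation tc := (test_case d phi).
Local Notation ncov := (n_covered d t).
Local Notation TA := (Ta d phi t).
Local Notation X := (psi_var P V).
Local Notation I := (Psi d phi t N lb).
Local Notation cov tau := ((@covers P V)^~ tau).

Lemma upper (L : seq {ffun P -> V}) k :
  size L = N -> all tc L -> k <= N ->
  (forall tau, tau \in TA -> has (cov tau) L -> has (cov tau) (take k L)) ->
  exists a, hard_sat I a /\
    soft_cost I a = (k - (lb + 1)) + (#|TA| - ncov L) * (m_u N lb + 1).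
Proof.
move=> sL HL kN Hk.
pose row i := nth A0 L i.-1.
have rowtc : forall i, i \in idxN N -> tc (row i).
  move=> i; rewrite mem_iota => /andP[i1 iN].
  apply: (allP HL); apply: mem_nth; rewrite sL; lia.
pose a (x : X) : bool :=
  match x with
  | xvar i p v => row i p == v
  | cvar i tau => if has (cov tau) L then has (cov tau) (take i L) else i < N
  | uvar i => i <= k
  end.
exists a; split.
  rewrite hard_sat_eq; repeat (apply/andP; split).
  - apply/all_allpairsP => i p Hi Hp.
    have /andP[/forallP Hd Hphi] := rowtc i Hi.
    rewrite /exactly_one /=; apply/andP; split.
      rewrite eval_big_or -map_comp has_map; apply/hasP; exists (row i p).
        by rewrite mem_enum.
      by rewrite /= eqxx.
    apply: amo_complete; first exact: enum_uniq.
    by move=> x y _ _ /= /eqP <- /eqP <-.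
  - rewrite all_map; apply/allP => i Hi /=.
    rewrite eval_map; have /andP[_ Hphi] := rowtc i Hi; exact: Hphi.
  - rewrite all_flat; apply/all_allpairsP => i tau Hi Htau.
    rewrite all_map; apply/allP => pv Hpv /=.
    move: Hi; rewrite mem_iota => /andP[i1 iN].
    case: i i1 iN => // j _ jN /=.
    case Hc: (has (cov tau) L); last by apply/implyP => _; apply/orP; left; lia.
    rewrite (take_nth A0); last by rewrite sL; lia.
    rewrite has_rcons; apply/implyP => /orP[Hcov | ->]; last by [].
    apply/orP; right; move/forall_inP: Hcov => /(_ pv); rewrite -mem_enum => /(_ Hpv).
    by [].
  - rewrite all_map; apply/allP => tau Htau /=.
    rewrite /a /=. by case: (has (cov tau) L); rewrite ?take0 ?ltnn /= ?implybT.
  - rewrite all_map; apply/allP => i Hi /=.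
    by apply/implyP => H; apply: ltnW.
  apply/all_allpairsP => i tau Hi Htau /=.
  apply/implyP => Hn; move: Hi; rewrite mem_iota => /andP[i1 iN].
  case: (leqP i k) => // ki; exfalso; move: Hn.
  case Hc: (has (cov tau) L).
    have := Hk tau _ Hc; rewrite -(mem_enum (mem TA)) => /(_ Htau) H.
    by rewrite (has_take_mono (n := i.-1) _ H) //; lia.
  apply/negP/negPn; lia.
have Hu : count (fun i => a (@uvar P V i)) (idx_U N lb) = k - (lb + 1).
  rewrite (@eq_count _ _ (fun i => i < k.+1)) //.
  by rewrite count_iota_lt; lia.
have Hcv : forall tau, a (@cvar P V N tau) = has (cov tau) L.
  move=> tau; rewrite /a; by case Hc: (has _ L); rewrite ?ltnn // -sL take_size Hc.
have Hcn : count (fun tau => ~~ a (@cvar P V N tau)) (enum TA) = #|TA| - ncov L.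
  have -> : count (fun tau => ~~ a (@cvar P V N tau)) (enum TA) =
      count (predC (fun tau => has (cov tau) L)) (enum TA).
    apply: eq_count => x; exact: (congr1 negb (Hcv x)).
  have E := count_predC (fun tau => has (cov tau) L) (enum TA).
  rewrite -cardE in E.
  have E2 : count (fun tau => has (cov tau) L) (enum TA) = ncov L.
    rewrite count_enum_card /n_covered; apply: eq_card => tau; rewrite !inE.
    apply/andP/andP => [[H1 H2]|[H1 H2]]; split => //.
      by move: H1; rewrite /allowed => /andP[].
    by have := subsetP (ncov_sub_Ta t HL) tau; rewrite !inE H1 H2; apply.
  rewrite E2 in E; rewrite -E addKn //.
by rewrite soft_cost_eq Hu Hcn.
Qed.

End Upper.

Lemma In_in (T : eqType) (x : T) (s : seq T) : List.In x s -> x \in s.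
Proof.
elim: s => //= y s IH [-> | /IH H]; first by rewrite mem_head.
by rewrite inE H orbT.
Qed.

Section Lower.
Variables (P V : finType) (d : P -> {set V}) (phi : form (P * V)) (t N lb : nat).
Variable A0 : {ffun P -> V}.
Hypothesis HA0 : test_case d phi A0.
Hypothesis Hsut : sut_model d phi.
Variable a : psi_var P V -> bool.
Hypothesis Hh : hard_sat (Psi d phi t N lb) a.

Local Notation tc := (test_case d phi).
Local Notation ncov := (n_covered d t).
Local Notation Tm := (Tmax d phi t).
Local Notation TA := (Ta d phi t).
Local Notation CANv := (CAN d phi t).
Local Notation cov tau := ((@covers P V)^~ tau).


Definition row i : {ffun P -> V} :=
  [ffun p => odflt (A0 p) [pick v in d p | a (@xvar P V i p v)]].

Let HX : all (eval_form a) (hard_X d N).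
Proof. by move: Hh; rewrite hard_sat_eq => /and5P[]. Qed.
Let HS : all (eval_form a) (hard_SUTX phi N).
Proof. by move: Hh; rewrite hard_sat_eq => /and5P[]. Qed.
Let HA : all (eval_form a) (hard_a d phi t N).
Proof. by move: Hh; rewrite hard_sat_eq => /and5P[]. Qed.
Let HC : all (eval_form a) (hard_c d phi t N).
Proof. by move: Hh; rewrite hard_sat_eq => /and5P[]. Qed.
Let HU : all (eval_form a) (hard_CCU d phi t N lb).
Proof. by move: Hh; rewrite hard_sat_eq => /and5P[_ _ _ _ /andP[]]. Qed.

Local Ltac slia := (try clear HX); (try clear HS); (try clear HA); (try clear HC); (try clear HU);
  (try clear Hh); (try clear Hsut); (try clear HA0); lia.

Lemma row_spec i p v : 1 <= i <= N -> v \in d p ->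
  a (@xvar P V i p v) = (row i p == v).
Proof.
move=> Hi Hv.
have Hi' : i \in idxN N by rewrite mem_iota; slia.
have Hp : p \in enum P by rewrite mem_enum.
move: (all_allpairsP HX i p Hi' Hp); rewrite /exactly_one /= => /andP[Hor Hamo].
rewrite ffunE; case: pickP => [w /andP[Hw Haw] | Hn] /=.
  apply/idP/eqP => [Hav | <-] //.
  apply: (amo_sound Hamo); rewrite ?mem_enum //.
move: Hor; rewrite eval_big_or -map_comp has_map => /hasP[w Hw Haw].
by move: (Hn w) Haw => /=; rewrite -mem_enum Hw /= => ->.
Qed.

Lemma row_tc i : 1 <= i <= N -> tc (row i).
Proof.
move=> Hi.
have Hi' : i \in idxN N by rewrite mem_iota; slia.
have Hd : forall p, row i p \in d p.
  move=> p; rewrite ffunE; case: pickP => [w /andP[Hw _] | Hn] //=.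
  have Hp : p \in enum P by rewrite mem_enum.
  move: (all_allpairsP HX i p Hi' Hp); rewrite /exactly_one /= => /andP[Hor _].
  move: Hor; rewrite eval_big_or -map_comp has_map => /hasP[w Hw Haw].
  by move: (Hn w) Haw => /=; rewrite -mem_enum Hw /= => ->.
apply/andP; split; first by apply/forallP.
move: HS; rewrite /hard_SUTX all_map => /allP /(_ i Hi') /=; rewrite eval_map => H.
have E : eval_form (fun x => a (@xvar P V i x.1 x.2)) phi =
         eval_form (fun pv => row i pv.1 == pv.2) phi.
  apply: eval_ext => pv Hpv /=.
  have Hpv' : pv \in atoms phi by apply: In_in.
  case: Hsut => _ /(_ pv Hpv') Hdv.
  by rewrite (row_spec Hi Hdv).
by rewrite -E.
Qed.

Definition Lk k := map row (iota 1 k).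

Lemma Lk_tc k : k <= N -> all tc (Lk k).
Proof. by move=> kN; rewrite all_map; apply/allP => i; rewrite mem_iota => Hi; apply: row_tc; slia. Qed.

Lemma size_Lk k : size (Lk k) = k.
Proof. by rewrite size_map size_iota. Qed.

Lemma cover_k tau : tau \in TA -> ~~ a (@cvar P V 0 tau) ->
  forall k, k <= N -> a (@cvar P V k tau) -> has (cov tau) (Lk k).
Proof.
move=> Htau H0; elim => [|k IH] kN Hk; first by rewrite Hk in H0.
rewrite /Lk -[k.+1]addn1 iotaD map_cat has_cat /= add1n.
have Hi : k.+1 \in idxN N by rewrite mem_iota; slia.
have Htau' : tau \in enum TA by rewrite mem_enum.
move: HA; rewrite all_flat => /all_allpairsP /(_ _ _ Hi Htau'); rewrite all_map => /allP Hpv.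
case Hck: (a (@cvar P V k tau)).
  by rewrite IH ?orbT //; slia.
rewrite orbF; apply/orP; right; apply/forall_inP => pv Hpvt.
have := Hpv pv; rewrite mem_enum => /(_ Hpvt) /=; rewrite Hk Hck /= => Hx.
have Hd : pv.2 \in d pv.1.
  by move: Htau; rewrite inE => /andP[/and3P[_ /forall_inP Hd _] _]; apply: Hd.
by rewrite -row_spec //; slia.
Qed.

Hypothesis Hlb : lb < CANv.
Hypothesis HlbN : lb + 1 <= N.

Lemma honest tau : tau \in TA -> a (@cvar P V N tau) -> ~~ a (@cvar P V 0 tau).
Proof.
move=> Htau Hq.
have Htau' : tau \in enum TA by rewrite mem_enum.
move: HC; rewrite /hard_c all_map => /allP /(_ tau Htau') /=.
by rewrite Hq.
Qed.

Lemma h_le k : k <= N -> (forall tau, tau \in TA -> a (@cvar P V N tau) -> a (@cvar P V k tau)) ->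
  count (fun tau => a (@cvar P V N tau)) (enum TA) <= Tm k.
Proof.
move=> kN Hk.
apply: (@leq_trans (ncov (Lk k))); last first.
  by have := Tmax_ge t (Lk_tc kN); rewrite size_Lk.
rewrite count_enum_card; apply: subset_leq_card; apply/subsetP => tau.
rewrite !inE => /andP[Htau Hq].
have Htau' : tau \in TA by rewrite inE.
apply/andP; split; first by move: Htau => /andP[].
apply: (cover_k Htau' (honest Htau' Hq) kN); exact: Hk.
Qed.

Lemma lower_bound :
  (if CANv <= N then CANv - (lb + 1) + (#|TA| - Tm N) * (m_u N lb + 1)
   else N - (lb + 1) + (#|TA| - Tm N) * (m_u N lb + 1)) <= soft_cost (Psi d phi t N lb) a.
Proof.
set i0 := if CANv <= N then CANv else N.
have Hi0N : i0 <= N by rewrite /i0; case: ifP => //; slia.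
have Hi0C : i0 <= CANv by rewrite /i0; case: ifP => //; slia.
have -> : (if CANv <= N then CANv - (lb + 1) + (#|TA| - Tm N) * (m_u N lb + 1)
   else N - (lb + 1) + (#|TA| - Tm N) * (m_u N lb + 1)) =
   i0 - (lb + 1) + (#|TA| - Tm N) * (m_u N lb + 1) by rewrite /i0; case: ifP.
rewrite soft_cost_eq.
set h := count (fun tau => a (@cvar P V N tau)) (enum TA).
have Ecd : count (fun tau => ~~ a (@cvar P V N tau)) (enum TA) = #|TA| - h.
  by rewrite cardE -(count_predC (fun tau => a (@cvar P V N tau))) addKn.
rewrite Ecd.
have hT : h <= Tm N by apply: h_le.
have TT : Tm N <= #|TA| by exact: (Tmax_le_Ta t HA0 N).
set U := count _ (idx_U N lb).
set T := Tm N.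
have Hm : m_u N lb = N - (lb + 1) by [].
case: (ltngtP h T) => [hlt | hgt | heq]; last first.
- have HUi : forall i, lb + 2 <= i <= i0 -> a (@uvar P V i).
    move=> [|j] /andP[i1 i2]; first by slia.
    apply/negPn/negP => Hn.
    have HiU : j.+1 \in idx_U N lb by rewrite mem_iota; slia.
    have Hall : forall tau, tau \in TA -> a (@cvar P V N tau) -> a (@cvar P V j tau).
      move=> tau Htau _.
      have Htau' : tau \in enum TA by rewrite mem_enum.
      move: (all_allpairsP HU j.+1 tau HiU Htau') => /=.
      by rewrite (negbTE Hn) implybF negbK.
    have := h_le (k := j) ltac:(slia) Hall.
    have := Tmax_strict (t := t) HA0 (k := j) ltac:(slia).
    have := Tmax_mono t HA0 (k := j.+1) (n := N) ltac:(slia).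
    rewrite -/T; slia.
  have HUc : i0 - (lb + 1) <= U.
    apply: (@leq_trans (count (fun i => i < i0.+1) (idx_U N lb))).
      by rewrite count_iota_lt; slia.
    apply: count_sub_in => i; rewrite mem_iota => Hi Hlt; apply: HUi; slia.
  rewrite heq; slia.
- slia.
- have Hle : (#|TA| - T + 1) * (m_u N lb + 1) <= (#|TA| - h) * (m_u N lb + 1).
    by apply: leq_mul => //; slia.
  rewrite mulnDl mul1n in Hle.
  rewrite Hm in Hle *; slia.
Qed.

End Lower.

Theorem proposition12 (P V : finType) (d : P -> {set V}) (phi : form (P * V))
    (t N lb : nat) :
  sut_model d phi ->
  (exists A : {ffun P -> V}, test_case d phi A) ->
  1 <= t <= #|P| ->
  1 <= N ->
  lb < CAN d phi t ->
  lb + 1 <= N ->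
  wpms_opt_cost (Psi d phi t N lb)
    (if CAN d phi t <= N then
       CAN d phi t - (lb + 1)
         + (#|Ta d phi t| - Tmax d phi t N) * (m_u N lb + 1)
     else
       N - (lb + 1) + (#|Ta d phi t| - Tmax d phi t N) * (m_u N lb + 1)).
Proof.
move=> Hsut [A0 HA0] Ht HN Hlb HlbN.
split; last first.
  by move=> a Ha; apply: (lower_bound HA0 Hsut Ha Hlb HlbN).
case: (leqP (CAN d phi t) N) => HC.
  have [L0 [sL0 HL0 Hc0]] := CA_wit d phi t.
  pose L := L0 ++ nseq (N - CAN d phi t) A0.
  have sL : size L = N by rewrite size_cat size_nseq sL0; lia.
  have HL : all (test_case d phi) L.
    by rewrite all_cat HL0 /=; apply/allP => x /nseqP[-> _].
  have Hk : forall tau, tau \in Ta d phi t -> has ((@covers P V)^~ tau) L ->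
      has ((@covers P V)^~ tau) (take (CAN d phi t) L).
    by move=> tau Htau _; rewrite take_size_cat // Hc0.
  have [a [Hsat Hcost]] := upper (t := t) lb A0 sL HL HC Hk.
  exists a; split => //; rewrite Hcost.
  have E1 : n_covered d t L = #|Ta d phi t|.
    apply/eqP; rewrite eqn_leq ncov_le_Ta //=.
    apply: subset_leq_card; apply/subsetP => tau Htau; rewrite inE.
    have := Htau; rewrite inE => /andP[-> _] /=.
    by rewrite has_cat Hc0.
  have E2 : Tmax d phi t N = #|Ta d phi t|.
    apply/eqP; rewrite eqn_leq (Tmax_le_Ta t HA0 N) /=.
    by rewrite -E1; have := Tmax_ge t HL; rewrite sL.
  by rewrite E1 E2.
have [L [sL HL HT]] := Tmax_wit t HA0 N.
have Hk : forall tau, tau \in Ta d phi t -> has ((@covers P V)^~ tau) L ->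
    has ((@covers P V)^~ tau) (take N L).
  by move=> tau _ H; rewrite -sL take_size.
have [a [Hsat Hcost]] := upper (t := t) lb A0 sL HL (leqnn N) Hk.
exists a; split => //; rewrite Hcost HT.
by [].
Qed.
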